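(* Let $G$ be a graph, $S\subseteq V(G)$, and $C$ a connected component of $G$, and suppose we are given a proper $2$-coloring (with colors white and black) of $C$. Let $G'$ be the graph obtained from $G$ by replacing $C$ with a star (with a new center vertex) whose ray vertices (leaves) are the vertices of $C\cap S$, and then subdividing those star edges whose ray vertex is black in the $2$-coloring. Then $B_G(S)=B_{G'}(S)$.
   Context: For a graph $G$ and $S\subseteq V(G)$, $B_G(S)$ is the set of subsets $S'\subseteq S$ such that there is a bipartition of $G$ (a proper $2$-coloring) with all vertices of $S'$ in one part and all vertices of $S\setminus S'$ in the other. If $G$ is not bipartite, $B_G(S)=\emptyset$. *)

(* Defs.v *)
From mathcomp Require Import all_boot.
Set Implicit Arguments. Unset Strict Implicit. Unset Printing Implicit Defensive.

Section Graphs.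
Variable T : finType.

(* A graph is a vertex set V : {set T} with an edge relation e : rel T
   (symmetric, irreflexive); only edges between vertices of V count. *)

Definition proper2 (V : {set T}) (e : rel T) (c : T -> bool) : Prop :=
  forall x y, x \in V -> y \in V -> e x y -> c x != c y.

(* S' \in B_G(S): some bipartition (color classes of a proper 2-coloring c,
   parts [c = true] and [c = false]) puts S' in one part and S \ S' in
   the other. *)
Definition bipart_with (V : {set T}) (e : rel T) (S S' : {set T}) : Prop :=
  exists c : T -> bool, proper2 V e c /\
    (forall x, x \in S' -> c x = true) /\
    (forall x, x \in S :\: S' -> c x = false).

Definition ingraph (V : {set T}) (e : rel T) : rel T :=
  [rel x y | [&& x \in V, y \in V & e x y]].

Definition is_component (V : {set T}) (e : rel T) (C : {set T}) : Prop :=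
  exists2 x, x \in V & C = [set y in V | connect (ingraph V e) x y].

End Graphs.

Section Star.
Variables (T : finType) (V : {set T}) (e : rel T) (C S : {set T}) (col : T -> bool).
(* col x = true means x is black, false means white. *)

(* Vertices of G' live in T + option T: inl x is an original vertex x,
   inr None is the new star center, inr (Some s) is the subdivision vertex
   on the star edge to the black leaf s. *)
Definition star_vertices : {set T + option T} :=
  [set inl x | x in (V :\: C) :|: (C :&: S)]
  :|: [set inr None]
  :|: [set inr (Some s) | s in [set s in C :&: S | col s]].

Definition star_edge : rel (T + option T) := fun u v =>
  match u, v with
  | inl x, inl y => [&& x \in V :\: C, y \in V :\: C & e x y]
  | inl x, inr None | inr None, inl x => (x \in C :&: S) && ~~ col x
  | inl x, inr (Some s) | inr (Some s), inl x =>
      [&& x == s, s \in C :&: S & col s]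
  | inr None, inr (Some s) | inr (Some s), inr None => (s \in C :&: S) && col s
  | _, _ => false
  end.
End Star.

(* Main.v *)
Require Import Defs.
From mathcomp Require Import all_boot.

Lemma path_inv (T : eqType) (R : rel T) (P : pred T) (f : T -> bool) :
  (forall u v, P u -> R u v -> P v /\ f u = f v) ->
  forall a p, P a -> path R a p -> f (last a p) = f a.
Proof.
move=> H a p; elim: p a => [|b p IH] a //= Pa /andP[Rab Hp].
have [Pb fab] := H _ _ Pa Rab.
by rewrite IH // fab.
Qed.

Section Aux.
Variables (T : finType) (V : {set T}) (e : rel T) (x0 : T).
Let C := [set y in V | connect (ingraph V e) x0 y].

Lemma comp_closed x y : x \in C -> y \in V -> e x y -> y \in C.
Proof.
rewrite !inE => /andP[xV cx] yV exy; rewrite yV /=.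
apply: connect_trans cx _; apply: connect1; by rewrite /ingraph /= xV yV exy.
Qed.

Lemma comp_inv (f : T -> bool) :
  (forall u v, u \in C -> v \in C -> e u v -> f u = f v) ->
  forall y, y \in C -> f y = f x0.
Proof.
move=> H y; rewrite inE => /andP[yV /connectP[p Hp Ey]].
have x0V : x0 \in V.
  case: p Hp Ey => [|b p] /=. by move=> _ <-.
  move=> /andP[]. rewrite /ingraph /=. by case/and3P.
rewrite Ey.
apply: (@path_inv _ _ (fun z => z \in C)) Hp; last by rewrite inE x0V connect0.
move=> u v uC /and3P[uV vV euv].
have vC := comp_closed _ _ uC vV euv. split => //; exact: H.
Qed.
End Aux.
Arguments comp_closed {T V e x0 x y}.
Arguments comp_inv {T V e x0 f}.

Theorem lemma5p4 (T : finType) (V : {set T}) (e : rel T)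
    (e_sym : symmetric e) (e_irr : irreflexive e)
    (S C : {set T}) (col : T -> bool) :
  S \subset V ->
  is_component V e C ->
  proper2 C e col ->
  forall S' : {set T}, S' \subset S ->
    (bipart_with V e S S' <->
     bipart_with (star_vertices V C S col) (star_edge V e C S col)
                 [set inl x | x in S] [set inl x | x in S']).
Proof.
move=> SV [x0 x0V ->] pcol S' S'S.
set C0 := [set y in V | _].
have x0C : x0 \in C0 by rewrite inE x0V connect0.
split.
- case=> c [pc [hS' hSd]].
  pose k := c x0 (+) col x0.
  have F : forall y, y \in C0 -> c y = col y (+) k.
    move=> y yC.
    have := comp_inv (f := fun y => c y (+) col y) _ _ yC.
    rewrite /k => <-; first by case: (c y); case: (col y).
    move=> u v uC vC euv.
    have := pcol _ _ uC vC euv.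
    have uV : u \in V by move: uC; rewrite inE => /andP[].
    have vV : v \in V by move: vC; rewrite inE => /andP[].
    have := pc _ _ uV vV euv.
    by case: (c u); case: (c v); case: (col u); case: (col v).
  exists (fun u => match u with inl x => c x | inr None => ~~ k | inr (Some _) => k end).
  split; last split.
  + move=> [x|[s|]] [y|[t|]] _ _ //=.
    * case/and3P; rewrite !inE => /andP[_ xV] /andP[_ yV] exy; exact: pc.
    * case/and3P => /eqP -> sCS cs.
      move: sCS; rewrite inE => /andP[sC _].
      by rewrite F // cs; case: (k).
    * case/andP; rewrite inE => /andP[xC _] cx.
      by rewrite F // (negbTE cx); case: (k).
    * case/and3P => /eqP -> sCS cs.
      move: sCS; rewrite inE => /andP[sC _].
      by rewrite F // cs; case: (k).
    * by case/andP=> _ _; case: (k).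
    * case/andP; rewrite inE => /andP[yC _] cy.
      by rewrite F // (negbTE cy); case: (k).
    * by case/andP=> _ _; case: (k).
  + by move=> u /imsetP[x xS' ->]; exact: hS'.
  + move=> u /setDP[/imsetP[x xS ->] nx].
    apply: hSd; rewrite inE xS andbT.
    by apply/negP => xS'; move: nx; rewrite imset_f.
- case=> c [pc [hS' hSd]].
  pose k := ~~ c (inr None).
  have mem_inl : forall x, x \in (V :\: C0) :|: (C0 :&: S) ->
      inl x \in star_vertices V C0 S col.
    by move=> x hx; apply/setUP; left; apply/setUP; left; exact: imset_f.
  have mem_cen : inr None \in star_vertices V C0 S col.
    by apply/setUP; left; apply/setUP; right; exact: set11.
  have mem_sub : forall s, s \in C0 :&: S -> col s ->
      inr (Some s) \in star_vertices V C0 S col.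
    move=> s hs cs; apply/setUP; right.
    by apply: imset_f; rewrite inE hs cs.
  have G : forall x, x \in C0 :&: S -> c (inl x) = col x (+) k.
    move=> x hx.
    have hxi : inl x \in star_vertices V C0 S col by apply: mem_inl; rewrite inE hx orbT.
    case cx: (col x).
    + have hs := mem_sub _ hx cx.
      have h1 := pc _ _ hs hxi.
      have h2 := pc _ _ hs mem_cen.
      move: h1 h2; rewrite /= eqxx hx cx /= /k => /(_ isT) h1 /(_ isT) h2.
      by move: h1 h2; case: (c (inl x)); case: (c (inr None)); case: (c (inr (Some x))).
    + have := pc _ _ hxi mem_cen; rewrite /= hx cx /= /k => /(_ isT).
      by case: (c (inl x)); case: (c (inr None)).
  exists (fun x => if x \in C0 then col x (+) k else c (inl x)).
  split; last split.
  + move=> x y xV yV exy.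
    case xC: (x \in C0); case yC: (y \in C0).
    * by have := pcol _ _ xC yC exy; case: (col x); case: (col y); case: (k).
    * by rewrite (comp_closed xC yV exy) in yC.
    * by rewrite e_sym in exy; rewrite (comp_closed yC xV exy) in xC.
    * have hx : x \in V :\: C0 by rewrite inE xC xV.
      have hy : y \in V :\: C0 by rewrite inE yC yV.
      apply: pc; try (apply: mem_inl; rewrite inE ?hx ?hy //).
      by rewrite /= hx hy exy.
  + move=> x xS'.
    have xS : x \in S by apply: (subsetP S'S).
    have := hS' (inl x) (imset_f _ xS').
    case xC: (x \in C0) => //.
    by rewrite G // inE xC xS.
  + move=> x hx.
    have hxi : (inl x : T + option T) \in [set inl x | x in S] :\: [set inl x | x in S'].
      move: hx; rewrite inE => /andP[nx xS].
      apply/setDP; split; first exact: imset_f.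
      by rewrite mem_imset // => a b [].
    have := hSd _ hxi.
    have xS : x \in S by move: hx; rewrite inE => /andP[].
    case xC: (x \in C0) => //.
    by rewrite G // inE xC xS.
Qed.
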